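(* For every integer $g\geq 1$ there exist a connected graph $G$ and a connected spanning subgraph $H$ of $G$, both having $R_g$-cutsets, such that $\kappa_g(G)=1$ and $\kappa_g(H)=2$; in particular $\kappa_g(H)>\kappa_g(G)$. Concretely: let $X_1,X_2,Y_1,Y_2$ be four vertex-disjoint cliques, each with at least $g+1$ vertices, and let $u,v,w$ be three further vertices; $G$ is obtained by joining $u$ to every vertex of $X_1\cup X_2\cup Y_1\cup Y_2$, joining each of $v$ and $w$ to every vertex of $Y_1\cup Y_2$, and adding the edges $uv,uw$; $H$ is obtained from $G$ by deleting all edges inside $X_1$ and inside $X_2$, all edges between $u$ and $Y_1$, and the edges $uv,uw$.
   Context: All graphs are finite and simple. A set $S\subseteq V(G)$ is a cutset if $G-S$ is disconnected. For a non-negative integer $g$, a cutset $S$ is an $R_g$-cutset if every connected component of $G-S$ has at least $g+1$ vertices. If $G$ has at least one $R_g$-cutset, the $g$-extra connectivity $\kappa_g(G)$ is the minimum cardinality of an $R_g$-cutset of $G$. A spanning subgraph of $G$ is a subgraph with vertex set $V(G)$. *)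

(* Defs.v *)
From mathcomp Require Import all_boot.
Set Implicit Arguments. Unset Strict Implicit. Unset Printing Implicit Defensive.

Definition simple_graph (T : finType) (e : rel T) : Prop :=
  irreflexive e /\ symmetric e.

Definition connected_graph (T : finType) (e : rel T) : Prop :=
  forall x y : T, connect e x y.

Definition spanning_subgraph (T : finType) (f e : rel T) : Prop :=
  forall x y : T, f x y -> e x y.

Definition del_rel (T : finType) (e : rel T) (S : {set T}) : rel T :=
  fun x y => [&& x \notin S, y \notin S & e x y].

Definition comp_del (T : finType) (e : rel T) (S : {set T}) (x : T) : {set T} :=
  [set y | (y \notin S) && connect (del_rel e S) x y].

Definition cutset (T : finType) (e : rel T) (S : {set T}) : bool :=
  [exists x, exists y,
     [&& x \notin S, y \notin S & ~~ connect (del_rel e S) x y]].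

Definition Rg_cutset (T : finType) (e : rel T) (g : nat) (S : {set T}) : bool :=
  cutset e S && [forall x, (x \notin S) ==> (g < #|comp_del e S x|)].

Definition has_Rg_cutset (T : finType) (e : rel T) (g : nat) : Prop :=
  exists S : {set T}, Rg_cutset e g S.

(* g-extra connectivity: minimum cardinality of an R_g-cutset (meaningful
   when one exists; the default #|T| is never attained by a cutset). *)
Definition kappa_g (T : finType) (e : rel T) (g : nat) : nat :=
  \big[minn/#|T|]_(S : {set T} | Rg_cutset e g S) #|S|.

Definition symclos (T : finType) (b : rel T) : rel T :=
  fun x y => (x != y) && (b x y || b y x).

Definition G_base (T : finType) (X1 X2 Y1 Y2 : {set T}) (u v w : T) : rel T :=
  fun x y =>
    [|| (x \in X1) && (y \in X1),
        (x \in X2) && (y \in X2),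
        (x \in Y1) && (y \in Y1),
        (x \in Y2) && (y \in Y2),
        (x == u) && (y \in X1 :|: X2 :|: Y1 :|: Y2),
        ((x == v) || (x == w)) && (y \in Y1 :|: Y2)
      | (x == u) && ((y == v) || (y == w))].

Definition G_rel (T : finType) (X1 X2 Y1 Y2 : {set T}) (u v w : T) : rel T :=
  symclos (G_base X1 X2 Y1 Y2 u v w).

Definition H_base (T : finType) (X1 X2 Y1 Y2 : {set T}) (u v w : T) : rel T :=
  fun x y =>
    [|| (x \in Y1) && (y \in Y1),
        (x \in Y2) && (y \in Y2),
        (x == u) && (y \in X1 :|: X2 :|: Y2)
      | ((x == v) || (x == w)) && (y \in Y1 :|: Y2)].

Definition H_rel (T : finType) (X1 X2 Y1 Y2 : {set T}) (u v w : T) : rel T :=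
  symclos (H_base X1 X2 Y1 Y2 u v w).

(* Main.v *)
Require Import Defs.
From mathcomp Require Import all_boot.
Set Implicit Arguments. Unset Strict Implicit. Unset Printing Implicit Defensive.

Lemma conn_closed (T : finType) (e : rel T) (P : pred T) :
  (forall x y, P x -> e x y -> P y) -> forall x y, connect e x y -> P x -> P y.
Proof.
move=> hP x y /connectP[p hp ->]; elim: p x hp => [|z p IH] x //= /andP[hxz hp] Px.
exact: IH _ hp (hP _ _ Px hxz).
Qed.

Lemma symclos_simple (T : finType) (b : rel T) : simple_graph (symclos b).
Proof.
split; first by move=> x; rewrite /symclos eqxx.
by move=> x y; rewrite /symclos eq_sym orbC.
Qed.

Lemma del_sym (T : finType) (e : rel T) (S : {set T}) : symmetric e -> symmetric (del_rel e S).
Proof. by move=> hs x y; rewrite /del_rel hs; case: (x \in S); case: (y \in S). Qed.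

Lemma del_mono (T : finType) (f e : rel T) (S : {set T}) x y :
  (forall a b, f a b -> e a b) -> connect (del_rel f S) x y -> connect (del_rel e S) x y.
Proof.
move=> hfe; apply: connect_sub => a b /and3P[ha hb hab]; apply: connect1.
by rewrite /del_rel ha hb hfe.
Qed.

Lemma dedge (T : finType) (e : rel T) (S : {set T}) x y :
  x \notin S -> y \notin S -> e x y -> connect (del_rel e S) x y.
Proof. by move=> hx hy hxy; apply: connect1; rewrite /del_rel hx hy hxy. Qed.

Lemma clique_conn (T : finType) (e : rel T) (S : {set T}) (A : {set T}) x y :
  (forall a b, a \in A -> b \in A -> a != b -> e a b) ->
  x \in A -> y \in A -> x \notin S -> y \notin S -> connect (del_rel e S) x y.
Proof.
move=> hc hx hy hxS hyS; case: (eqVneq x y) => [->|nxy]; first exact: connect0.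
exact: dedge hxS hyS (hc _ _ hx hy nxy).
Qed.

Lemma comp_big (T : finType) (e : rel T) (S : {set T}) x (A : {set T}) :
  (forall y, y \in A -> y \notin S /\ connect (del_rel e S) x y) ->
  #|A| <= #|comp_del e S x|.
Proof.
move=> h; apply: subset_leq_card; apply/subsetP => y hy; have [h1 h2] := h y hy.
by rewrite /comp_del inE h1 h2.
Qed.

Lemma exists_out (T : finType) (A S : {set T}) :
  1 < #|A| -> #|S| <= 1 -> exists a, a \in A /\ a \notin S.
Proof.
move=> hA hS; case: (pickP (fun a => (a \in A) && (a \notin S))) => [a /andP[h1 h2]|h].
  by exists a.
have: A \subset S by apply/subsetP => a ha; move: (h a); rewrite ha /= => /negbFE.
move/subset_leq_card => hle; have := leq_trans hA (leq_trans hle hS); by [].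
Qed.

Lemma bigmin_le (I : eqType) (r : seq I) (P : pred I) (F : I -> nat) x j :
  j \in r -> P j -> \big[minn/x]_(i <- r | P i) F i <= F j.
Proof.
elim: r => [|a r IH] //=; rewrite inE big_cons => /orP[/eqP <- -> | jr Pj].
  exact: geq_minl.
case: (P a); last exact: IH.
exact: leq_trans (geq_minr _ _) (IH jr Pj).
Qed.

Lemma bigmin_eq (T : finType) (P : pred {set T}) (k : nat) (S0 : {set T}) :
  P S0 -> #|S0| = k -> (forall S, P S -> k <= #|S|) -> k <= #|T| ->
  \big[minn/#|T|]_(S | P S) #|S| = k.
Proof.
move=> h0 hk hall hT; apply/eqP; rewrite eqn_leq; apply/andP; split.
  by rewrite -hk; apply: bigmin_le => //; rewrite mem_index_enum.
apply: (big_ind (fun n => k <= n)) => // a b ha hb; by rewrite leq_min ha hb.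
Qed.

Lemma del_forget (T : finType) (e : rel T) (S : {set T}) x y :
  connect (del_rel e S) x y -> connect e x y.
Proof.
apply: connect_sub => a b /and3P[_ _ hab]; exact: connect1.
Qed.

Unset Implicit Arguments.

Ltac cls0 cover tX1 tX2 tY1 tY2 x := let h := fresh "h" in
  case: (cover x) => [h|[h|[h|[h|[h|[h|h]]]]]];
  [ rewrite ?(tX1 x h) | rewrite ?(tX2 x h) | rewrite ?(tY1 x h) | rewrite ?(tY2 x h)
  | subst x | subst x | subst x].

Ltac ev0 cst euv euw evw := rewrite /H_rel /G_rel /symclos /H_base /G_base !inE ?cst ?euv ?euw ?evw ?eqxx /=.
Ltac ev1 cst euv euw evw := rewrite ?cst ?euv ?euw ?evw ?eqxx /= ?andbT ?andbF ?orbT ?orbF.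
Ltac fin tX1 tX2 tY1 tY2 cst euv euw evw :=
  repeat match goal with
  | h : is_true (?x \in ?A) |- _ =>
     first [ let r := constr:(tX1 x h) in rewrite ?r | let r := constr:(tX2 x h) in rewrite ?r | let r := constr:(tY1 x h) in rewrite ?r | let r := constr:(tY2 x h) in rewrite ?r ]; clear h
  end; ev1 cst euv euw evw.

Theorem mainTheorem2 (g : nat) (hg : 1 <= g)
    (T : finType) (X1 X2 Y1 Y2 : {set T}) (u v w : T)
    (hX1 : g < #|X1|) (hX2 : g < #|X2|) (hY1 : g < #|Y1|) (hY2 : g < #|Y2|)
    (d12 : [disjoint X1 & X2]) (d13 : [disjoint X1 & Y1])
    (d14 : [disjoint X1 & Y2]) (d23 : [disjoint X2 & Y1])
    (d24 : [disjoint X2 & Y2]) (d34 : [disjoint Y1 & Y2])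
    (hu : u \notin X1 :|: X2 :|: Y1 :|: Y2)
    (hv : v \notin X1 :|: X2 :|: Y1 :|: Y2)
    (hw : w \notin X1 :|: X2 :|: Y1 :|: Y2)
    (huv : u != v) (huw : u != w) (hvw : v != w)
    (hcover : forall x : T, x \in X1 :|: X2 :|: Y1 :|: Y2 :|: [set u; v; w]) :
  let G := G_rel X1 X2 Y1 Y2 u v w in
  let H := H_rel X1 X2 Y1 Y2 u v w in
  simple_graph G /\ simple_graph H /\
  connected_graph G /\ connected_graph H /\ spanning_subgraph H G /\
  has_Rg_cutset G g /\ has_Rg_cutset H g /\
  kappa_g G g = 1 /\ kappa_g H g = 2.
Proof.
move=> G H.
have inU : forall x, (x \in X1) || (x \in X2) || (x \in Y1) || (x \in Y2) -> x \in X1 :|: X2 :|: Y1 :|: Y2.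
  by move=> x; rewrite !inE.
have nu : forall x, x \in X1 :|: X2 :|: Y1 :|: Y2 -> ((x == u) = false) * ((u == x) = false).
  move=> x hx; have h : (x == u) = false by apply/negbTE; apply: contraNneq hu => <-.
  by split; rewrite // eq_sym h.
have nv : forall x, x \in X1 :|: X2 :|: Y1 :|: Y2 -> ((x == v) = false) * ((v == x) = false).
  move=> x hx; have h : (x == v) = false by apply/negbTE; apply: contraNneq hv => <-.
  by split; rewrite // eq_sym h.
have nw : forall x, x \in X1 :|: X2 :|: Y1 :|: Y2 -> ((x == w) = false) * ((w == x) = false).
  move=> x hx; have h : (x == w) = false by apply/negbTE; apply: contraNneq hw => <-.
  by split; rewrite // eq_sym h.
have [huX1 huX2 huY1 huY2] : [/\ (u \in X1) = false, (u \in X2) = false, (u \in Y1) = false & (u \in Y2) = false].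
  by move: hu; rewrite !inE !negb_or => /andP[/andP[/andP[/negbTE -> /negbTE ->] /negbTE ->] /negbTE ->].
have [hvX1 hvX2 hvY1 hvY2] : [/\ (v \in X1) = false, (v \in X2) = false, (v \in Y1) = false & (v \in Y2) = false].
  by move: hv; rewrite !inE !negb_or => /andP[/andP[/andP[/negbTE -> /negbTE ->] /negbTE ->] /negbTE ->].
have [hwX1 hwX2 hwY1 hwY2] : [/\ (w \in X1) = false, (w \in X2) = false, (w \in Y1) = false & (w \in Y2) = false].
  by move: hw; rewrite !inE !negb_or => /andP[/andP[/andP[/negbTE -> /negbTE ->] /negbTE ->] /negbTE ->].
have cst := (huX1, huX2, huY1, huY2, hvX1, hvX2, hvY1, hvY2, hwX1, hwX2, hwY1, hwY2,
  negbTE huv, negbTE huw, negbTE hvw, (negbTE huv : (u == v) = false)).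
have euv : (v == u) = false by rewrite eq_sym (negbTE huv).
have euw : (w == u) = false by rewrite eq_sym (negbTE huw).
have evw : (w == v) = false by rewrite eq_sym (negbTE hvw).
have tX1 : forall x, x \in X1 -> ((x \in X1) = true) * ((x \in X2) = false) * ((x \in Y1) = false) * ((x \in Y2) = false)
   * (((x == u) = false) * ((u == x) = false)) * (((x == v) = false) * ((v == x) = false)) * (((x == w) = false) * ((w == x) = false)).
  move=> x hx; have hU : x \in X1 :|: X2 :|: Y1 :|: Y2 by rewrite !inE hx.
  by rewrite hx (disjointFr d12 hx) (disjointFr d13 hx) (disjointFr d14 hx) !(nu x hU) !(nv x hU) !(nw x hU).
have tX2 : forall x, x \in X2 -> ((x \in X1) = false) * ((x \in X2) = true) * ((x \in Y1) = false) * ((x \in Y2) = false)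
   * (((x == u) = false) * ((u == x) = false)) * (((x == v) = false) * ((v == x) = false)) * (((x == w) = false) * ((w == x) = false)).
  move=> x hx; have hU : x \in X1 :|: X2 :|: Y1 :|: Y2 by rewrite !inE hx orbT.
  by rewrite hx (disjointFl d12 hx) (disjointFr d23 hx) (disjointFr d24 hx) !(nu x hU) !(nv x hU) !(nw x hU).
have tY1 : forall x, x \in Y1 -> ((x \in X1) = false) * ((x \in X2) = false) * ((x \in Y1) = true) * ((x \in Y2) = false)
   * (((x == u) = false) * ((u == x) = false)) * (((x == v) = false) * ((v == x) = false)) * (((x == w) = false) * ((w == x) = false)).
  move=> x hx; have hU : x \in X1 :|: X2 :|: Y1 :|: Y2 by rewrite !inE hx !orbT.
  by rewrite hx (disjointFl d13 hx) (disjointFl d23 hx) (disjointFr d34 hx) !(nu x hU) !(nv x hU) !(nw x hU).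
have tY2 : forall x, x \in Y2 -> ((x \in X1) = false) * ((x \in X2) = false) * ((x \in Y1) = false) * ((x \in Y2) = true)
   * (((x == u) = false) * ((u == x) = false)) * (((x == v) = false) * ((v == x) = false)) * (((x == w) = false) * ((w == x) = false)).
  move=> x hx; have hU : x \in X1 :|: X2 :|: Y1 :|: Y2 by rewrite !inE hx !orbT.
  by rewrite hx (disjointFl d14 hx) (disjointFl d24 hx) (disjointFl d34 hx) !(nu x hU) !(nv x hU) !(nw x hU).
have cover : forall x, x \in X1 \/ x \in X2 \/ x \in Y1 \/ x \in Y2 \/ x = u \/ x = v \/ x = w.
  move=> x; move: (hcover x); rewrite !inE.
  move=> H0.
  have [h|h] := boolP (x \in X1); first by left. rewrite (negbTE h) in H0.
  have [h'|h'] := boolP (x \in X2); first by right; left. rewrite (negbTE h') in H0.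
  have [h2|h2] := boolP (x \in Y1); first by do 2 right; left. rewrite (negbTE h2) in H0.
  have [h3|h3] := boolP (x \in Y2); first by do 3 right; left. rewrite (negbTE h3) in H0.
  have [h4|h4] := boolP (x == u); first by do 4 right; left; apply/eqP. rewrite (negbTE h4) in H0.
  have [h5|h5] := boolP (x == v); first by do 5 right; left; apply/eqP. rewrite (negbTE h5) in H0.
  by do 6 right; apply/eqP.
have sG : simple_graph G := symclos_simple _.
have sH : simple_graph H := symclos_simple _.
have sub : spanning_subgraph H G.
  move=> x y; rewrite /G /H.
  ev0 cst euv euw evw; cls0 cover tX1 tX2 tY1 tY2 x; cls0 cover tX1 tX2 tY1 tY2 y; ev1 cst euv euw evw; try done; try by case: (_ != _).
have E1 : forall x, (x \in X1) || (x \in X2) || (x \in Y2) -> H x u.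
  move=> x; rewrite /H; ev0 cst euv euw evw; cls0 cover tX1 tX2 tY1 tY2 x; fin tX1 tX2 tY1 tY2 cst euv euw evw; done.
have E2 : forall y t, (y \in Y1) || (y \in Y2) -> (t == v) || (t == w) -> H y t && H t y.
  move=> y t; rewrite /H; ev0 cst euv euw evw; cls0 cover tX1 tX2 tY1 tY2 y; cls0 cover tX1 tX2 tY1 tY2 t; fin tX1 tX2 tY1 tY2 cst euv euw evw; done.
have E3 : forall a b, a \in Y1 -> b \in Y1 -> a != b -> H a b.
  move=> a b; rewrite /H; ev0 cst euv euw evw; cls0 cover tX1 tX2 tY1 tY2 a; cls0 cover tX1 tX2 tY1 tY2 b; fin tX1 tX2 tY1 tY2 cst euv euw evw; done.
have E3' : forall a b, a \in Y2 -> b \in Y2 -> a != b -> H a b.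
  move=> a b; rewrite /H; ev0 cst euv euw evw; cls0 cover tX1 tX2 tY1 tY2 a; cls0 cover tX1 tX2 tY1 tY2 b; fin tX1 tX2 tY1 tY2 cst euv euw evw; done.
have E4 : forall a b, a \in X1 -> b \in X1 -> a != b -> G a b.
  move=> a b; rewrite /G; ev0 cst euv euw evw; cls0 cover tX1 tX2 tY1 tY2 a; cls0 cover tX1 tX2 tY1 tY2 b; fin tX1 tX2 tY1 tY2 cst euv euw evw; done.
have E4' : forall a b, a \in X2 -> b \in X2 -> a != b -> G a b.
  move=> a b; rewrite /G; ev0 cst euv euw evw; cls0 cover tX1 tX2 tY1 tY2 a; cls0 cover tX1 tX2 tY1 tY2 b; fin tX1 tX2 tY1 tY2 cst euv euw evw; done.
have E5 : forall x z, x \in X1 -> H x z -> z = u.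
  move=> x z; rewrite /H; ev0 cst euv euw evw; cls0 cover tX1 tX2 tY1 tY2 x; cls0 cover tX1 tX2 tY1 tY2 z; fin tX1 tX2 tY1 tY2 cst euv euw evw; done.
have E6 : forall x z, x \in X1 -> G x z -> z != u -> z \in X1.
  move=> x z; rewrite /G; ev0 cst euv euw evw; cls0 cover tX1 tX2 tY1 tY2 x; cls0 cover tX1 tX2 tY1 tY2 z; fin tX1 tX2 tY1 tY2 cst euv euw evw; done.
have E7 : forall x z, x \in Y1 -> H x z -> z != v -> z != w -> z \in Y1.
  move=> x z; rewrite /H; ev0 cst euv euw evw; cls0 cover tX1 tX2 tY1 tY2 x; cls0 cover tX1 tX2 tY1 tY2 z; fin tX1 tX2 tY1 tY2 cst euv euw evw; done.
have csym : forall S : {set T}, connect_sym (del_rel H S).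
  by move=> S; apply: sym_connect_sym; apply: del_sym; exact: sH.2.
have hub : forall S : {set T}, u \notin S -> #|S| <= 1 -> forall x, x \notin S -> connect (del_rel H S) x u.
  move=> S uS cS x xS.
  have [y2 [y2Y y2S]] := exists_out (leq_ltn_trans hg hY2) cS.
  have [t [tvw tS]] := exists_out (A := [set v; w]) ltac:(by rewrite cards2 hvw) cS.
  have tvw' : (t == v) || (t == w) by move: tvw; rewrite !inE.
  have y2u : connect (del_rel H S) y2 u := dedge y2S uS (E1 y2 ltac:(by rewrite y2Y !orbT)).
  have tu : connect (del_rel H S) t u.
    exact: connect_trans (dedge tS y2S (andP (E2 y2 t ltac:(by rewrite y2Y orbT) tvw')).2) y2u.
  case: (cover x) => [h|[h|[h|[h|[hx|[hx|hx]]]]]].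
  - by apply: dedge xS uS (E1 x _); rewrite h.
  - by apply: dedge xS uS (E1 x _); rewrite h orbT.
  - exact: connect_trans (dedge xS tS (andP (E2 x t ltac:(by rewrite h) tvw')).1) tu.
  - by apply: dedge xS uS (E1 x _); rewrite h !orbT.
  - by rewrite hx; exact: connect0.
  - subst x; exact: connect_trans (dedge xS y2S (andP (E2 y2 v ltac:(by rewrite y2Y orbT) ltac:(by rewrite eqxx))).2) y2u.
  - subst x; exact: connect_trans (dedge xS y2S (andP (E2 y2 w ltac:(by rewrite y2Y orbT) ltac:(by rewrite eqxx orbT))).2) y2u.
have connS : forall S : {set T}, u \notin S -> #|S| <= 1 -> forall x y, x \notin S -> y \notin S -> connect (del_rel H S) x y.
  move=> S uS cS x y xS yS; apply: connect_trans (hub S uS cS x xS) _.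
  by rewrite csym; exact: hub.
have cH : connected_graph H.
  move=> x y; apply: (@del_forget _ _ set0); apply: connS; by rewrite ?inE ?cards0.
have cG : connected_graph G.
  move=> x y; apply: (connect_sub (e := H)); last exact: cH.
  by move=> a b hab; apply: connect1; exact: sub.
have g1 : forall A : {set T}, g < #|A| -> 1 < #|A| := fun A h => leq_ltn_trans hg h.
have RgG : Rg_cutset G g [set u].
  apply/andP; split.
    have [x1 [x1X x1S]] := exists_out (g1 _ hX1) (eq_leq (cards1 u)).
    have [x2 [x2X x2S]] := exists_out (g1 _ hX2) (eq_leq (cards1 u)).
    apply/existsP; exists x1; apply/existsP; exists x2; rewrite x1S x2S /=.
    apply/negP => c.
    have : x2 \in X1.
      apply: (conn_closed (P := fun z => z \in X1)) c x1X.
      move=> a b ha /and3P[_ hb hab]; apply: E6 ha hab _; by move: hb; rewrite inE.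
    by rewrite (disjointFl d12 x2X).
  apply/forallP => x; apply/implyP => xS.
  have [y1 [y1Y y1S]] := exists_out (g1 _ hY1) (eq_leq (cards1 u)).
  have toV : forall z, (z \in Y1) || (z \in Y2) -> connect (del_rel G [set u]) v z.
    move=> z hz; apply: del_mono sub _; apply: dedge.
    - by rewrite inE eq_sym.
    - by case/orP: hz => hz; rewrite inE; [rewrite ?(tY1 z hz) | rewrite ?(tY2 z hz)].
    - by case/andP: (E2 z v hz ltac:(by rewrite eqxx)).
  have xV : (x \in Y1) || (x \in Y2) || (x == v) || (x == w) -> connect (del_rel G [set u]) x v.
    have cs : connect_sym (del_rel G [set u]) by apply: sym_connect_sym; apply: del_sym; exact: sG.2.
    case/orP => [/orP[/orP[h|h]|/eqP->]|/eqP hx].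
    - by rewrite cs; apply: toV; rewrite h.
    - by rewrite cs; apply: toV; rewrite h orbT.
    - exact: connect0.
    - subst x; rewrite cs; apply: connect_trans (toV y1 ltac:(by rewrite y1Y)) _.
      apply: del_mono sub _; apply: dedge => //.
      by case/andP: (E2 y1 w ltac:(by rewrite y1Y) ltac:(by rewrite eqxx orbT)).
  case: (cover x) => [h|[h|[h|[h|[hx|[hx|hx]]]]]].
  - apply: leq_trans hX1 _; apply: comp_big => y hy; split; first by rewrite inE ?(tX1 y hy).
    by apply: (clique_conn E4 h hy xS); rewrite inE ?(tX1 y hy).
  - apply: leq_trans hX2 _; apply: comp_big => y hy; split; first by rewrite inE ?(tX2 y hy).
    by apply: (clique_conn E4' h hy xS); rewrite inE ?(tX2 y hy).
  - apply: leq_trans hY1 _; apply: comp_big => y hy; split; first by rewrite inE ?(tY1 y hy).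
    apply: connect_trans (xV _) (toV y _); by rewrite ?h ?hy.
  - apply: leq_trans hY1 _; apply: comp_big => y hy; split; first by rewrite inE ?(tY1 y hy).
    apply: connect_trans (xV _) (toV y _); by rewrite ?h ?hy ?orbT.
  - by rewrite hx inE eqxx in xS.
  - apply: leq_trans hY1 _; apply: comp_big => y hy; split; first by rewrite inE ?(tY1 y hy).
    apply: connect_trans (xV _) (toV y _); by rewrite ?hx ?hy ?eqxx ?orbT.
  - apply: leq_trans hY1 _; apply: comp_big => y hy; split; first by rewrite inE ?(tY1 y hy).
    apply: connect_trans (xV _) (toV y _); by rewrite ?hx ?hy ?eqxx ?orbT.
have nvw : forall z, (z \in [set v; w]) = (z == v) || (z == w) by move=> z; rewrite !inE.
have RgH : Rg_cutset H g [set v; w].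
  have c2 : #|[set v; w]| <= 1 -> False by rewrite cards2 hvw.
  apply/andP; split.
    have [y1 [y1Y y1S]] := exists_out (g1 _ hY1) (eq_leq (cards1 u)).
    have y1S' : y1 \notin [set v; w] by rewrite nvw ?(tY1 y1 y1Y).
    apply/existsP; exists y1; apply/existsP; exists u; rewrite y1S' nvw (negbTE huv) (negbTE huw) /=.
    apply/negP => c.
    have : u \in Y1.
      apply: (conn_closed (P := fun z => z \in Y1)) c y1Y.
      move=> a b ha /and3P[_ hb hab]; move: hb; rewrite nvw negb_or => /andP[hb1 hb2].
      exact: (E7 a b ha hab hb1 hb2).
    by rewrite huY1.
  apply/forallP => x; apply/implyP => xS.
  have toU : (x \in X1) || (x \in X2) || (x \in Y2) || (x == u) -> connect (del_rel H [set v; w]) x u.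
    case/orP => [hx|/eqP->]; last exact: connect0.
    by apply: dedge => //; [rewrite nvw (negbTE huv) (negbTE huw)|exact: E1].
  have Y2c : (x \in X1) || (x \in X2) || (x \in Y2) || (x == u) ->
      forall y, y \in Y2 -> y \notin [set v; w] /\ connect (del_rel H [set v; w]) x y.
    move=> hx y hy; have yS : y \notin [set v; w] by rewrite nvw ?(tY2 y hy).
    split => //; apply: connect_trans (toU hx) _.
    apply: dedge => //; first by rewrite nvw (negbTE huv) (negbTE huw).
    by rewrite sH.2; apply: E1; rewrite hy !orbT.
  case: (cover x) => [h|[h|[h|[h|[hx|[hx|hx]]]]]].
  - by apply: leq_trans hY2 _; apply: comp_big; apply: Y2c; rewrite h.
  - by apply: leq_trans hY2 _; apply: comp_big; apply: Y2c; rewrite h orbT.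
  - apply: leq_trans hY1 _; apply: comp_big => y hy; split; first by rewrite nvw ?(tY1 y hy).
    by apply: (clique_conn E3 h hy xS); rewrite nvw ?(tY1 y hy).
  - by apply: leq_trans hY2 _; apply: comp_big; apply: Y2c; rewrite h !orbT.
  - by apply: leq_trans hY2 _; apply: comp_big; apply: Y2c; rewrite hx eqxx !orbT.
  - by rewrite hx nvw eqxx in xS.
  - by rewrite hx nvw eqxx orbT in xS.
have kG : kappa_g G g = 1.
  rewrite /kappa_g; apply: (bigmin_eq (P := fun S => Rg_cutset G g S) RgG (cards1 u)).
    move=> S /andP[/existsP[x /existsP[y /and3P[xS yS nc]]] _].
    case: (posnP #|S|) => // h0; move/cards0_eq: h0 => S0; subst S.
    case/negP: nc; apply: del_mono sub _; apply: connS => //; by rewrite ?inE ?cards0.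
  by rewrite -(cards1 u) max_card.
have kH : kappa_g H g = 2.
  rewrite /kappa_g; apply: (bigmin_eq (P := fun S => Rg_cutset H g S) RgH).
  - by rewrite cards2 hvw.
  - move=> S /andP[cut comps]; rewrite leqNgt ltnS; apply/negP => hS.
    case: (boolP (u \in S)) => uS.
      have [x [xX xS]] := exists_out (g1 _ hX1) hS.
      have := forallP comps x; rewrite xS /= => hc.
      have hle : #|comp_del H S x| <= 1.
        rewrite -(cards1 x); apply: subset_leq_card; apply/subsetP => y; rewrite /comp_del inE => /andP[_ c].
        have := conn_closed (P := pred1 x) _ c (eqxx x); rewrite inE; apply.
        move=> a b /eqP -> /and3P[_ hb hab]; have bu := E5 _ _ xX hab.
        by rewrite bu uS in hb.
      have := leq_trans hc hle; rewrite ltnS leqn0 => /eqP g0.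
      by rewrite g0 in hg.
    move: cut => /existsP[x /existsP[y /and3P[xS yS nc]]].
    by rewrite (connS S uS hS x y xS yS) in nc.
  - by have := max_card [set v; w]; rewrite cards2 hvw.
split; first exact: sG.
split; first exact: sH.
split; first exact: cG.
split; first exact: cH.
split; first exact: sub.
split; first by exists [set u].
split; first by exists [set v; w].
by split.
Qed.
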